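(* Let $n\ge1$, $G=\mathbb Z/n\mathbb Z$, $\omega$ a normalized 3-cocycle of $G$ with values in $\mathbb F^\times$, $X,Y$ finite $G$-sets, and let $(F,s):\mathcal M(X,\Psi_X)\to\mathcal M(Y,\Psi_Y)$ be a simple $\mathrm{Vec}_G^\omega$-module functor. Then there is an orbit $\Gamma$ of $X\times Y$ under the diagonal $G$-action such that $m^F_{xy}:=\dim_{\mathbb F}\mathrm{Hom}(F(x),y)$ equals $1$ for $(x,y)\in\Gamma$ and $0$ otherwise.
   Context: $\mathbb F$ is an algebraically closed field. $\mathrm{Vec}_G^\omega$: monoidal category of finite-dimensional $G$-graded $\mathbb F$-vector spaces, simple objects $\delta^g$, $\delta^g\otimes\delta^h=\delta^{gh}$, associator $a_{\delta^g,\delta^h,\delta^k}=\omega(g,h,k)\mathrm{id}$ for a normalized 3-cocycle $\omega$. For a $G$-set $X$ and a normalized $\Psi:G\times G\times X\to\mathbb F^\times$ with $\Psi(h,k,g^{-1}\cdot x)\Psi^{-1}(gh,k,x)\Psi(g,hk,x)\Psi^{-1}(g,h,x)=\omega^{-1}(g,h,k)$, $\mathcal M(X,\Psi)$ is the category of finite-dimensional $X$-graded vector spaces (simple objects $x\in X$) with $\delta^g\triangleright x=g\cdot x$ and module constraint $m_{\delta^g,\delta^h,x}=\Psi(g,h,(gh)\cdot x)\mathrm{id}_{(gh)\cdot x}$. A module functor $(F,s)$ is an $\mathbb F$-linear functor with natural isomorphism $s_{C,M}:F(C\triangleright M)\to C\triangleright F(M)$ satisfying $m'_{C,D,F(M)}\circ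 s_{C\otimes D,M}=(\mathrm{id}_C\triangleright s_{D,M})\circ s_{C,D\triangleright M}\circ F(m_{C,D,M})$; morphisms are natural transformations compatible with $s$. It is simple if it is simple in the abelian category of module functors $\mathcal M(X,\Psi_X)\to\mathcal M(Y,\Psi_Y)$ and their morphisms. *)

(* Defs.v *)
From HB Require Import structures.
From mathcomp Require Import all_boot all_algebra.
Set Implicit Arguments. Unset Strict Implicit. Unset Printing Implicit Defensive.
Import GRing.Theory.
Local Open Scope ring_scope.

Record gset (G : zmodType) := GSet {
  gs_T :> finType;
  gs_act : G -> gs_T -> gs_T;
  gs_act0 : forall x, gs_act 0 x = x;
  gs_actD : forall g h x, gs_act (g + h) x = gs_act g (gs_act h x) }.
Arguments gs_act {G} g _ _ : rename.
Arguments gs_actD {G} g _ _ _ : rename.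

Section Defs.
Variables (K : fieldType) (G : zmodType).

Definition normalized_3cocycle (w : G -> G -> G -> K) : Prop :=
  (forall g h k, w g h k != 0) /\
  (forall g h, w 0 g h = 1 /\ w g 0 h = 1 /\ w g h 0 = 1) /\
  (forall g h k l,
      w h k l * w g (h + k) l * w g h k = w (g + h) k l * w g h (k + l)).

Definition module_twist (X : gset G) (w : G -> G -> G -> K)
    (Psi : G -> G -> X -> K) : Prop :=
  (forall g h x, Psi g h x != 0) /\
  (forall h x, Psi 0 h x = 1 /\ Psi h 0 x = 1) /\
  (forall g h k x,
      Psi h k (gs_act X (- g) x) / Psi (g + h) k x * Psi g (h + k) x
        / Psi g h x = (w g h k)^-1).

(* Objects of (a skeleton of) the category of finite-dimensional X-graded
   K-vector spaces: dimension vectors d : X -> nat.  Morphisms: graded linear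
   maps, one matrix per degree (row-vector convention). *)
Definition hom (X : finType) (d d' : X -> nat) := forall x, 'M[K]_(d x, d' x).
Definition hid (X : finType) (d : X -> nat) : hom d d := fun x => 1%:M.
(* hcomp f g = "first f, then g" *)
Definition hcomp (X : finType) (d1 d2 d3 : X -> nat) (f : hom d1 d2)
  (g : hom d2 d3) : hom d1 d3 := fun x => f x *m g x.
Definition hadd (X : finType) (d d' : X -> nat) (f g : hom d d') : hom d d' :=
  fun x => f x + g x.
Definition hscale (X : finType) (d d' : X -> nat) (a : K) (f : hom d d') :
  hom d d' := fun x => a *: f x.

(* delta^g |> - on M(X,Psi): the simple x goes to g.x *)
Definition act_obj (X : gset G) (g : G) (d : X -> nat) : X -> nat :=
  fun x => d (gs_act X (- g) x).
Definition act_hom (X : gset G) (g : G) (d d' : X -> nat) (f : hom d d') :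
  hom (act_obj g d) (act_obj g d') := fun x => f (gs_act X (- g) x).

Lemma act_objD (X : gset G) g h (d : X -> nat) x :
  act_obj (g + h) d x = act_obj g (act_obj h d) x.
Proof. by rewrite /act_obj -gs_actD opprD addrC. Qed.

Definition hcast (X : finType) (d1 d2 : X -> nat) (e : forall x, d1 x = d2 x) :
  hom d1 d2 := fun x => castmx (erefl (d1 x), e x) (1%:M : 'M[K]_(d1 x)).

(* module constraint m_{delta^g,delta^h,M} : (delta^g (x) delta^h) |> M ->
   delta^g |> (delta^h |> M), acting by Psi(g,h,z) on the degree-z part
   (so on a simple x it is Psi(g,h,(gh).x) id_{(gh).x}). *)
Definition mcon (X : gset G) (Psi : G -> G -> X -> K) g h (d : X -> nat) :
  hom (act_obj (g + h) d) (act_obj g (act_obj h d)) :=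
  fun x => Psi g h x *: hcast (@act_objD X g h d) x.

(* K-linear Vec_G^omega-module functors (F,s) : M(X,PX) -> M(Y,PY).
   The structure s is given on the simple objects delta^g of Vec_G^omega
   (naturality in C is then automatic). *)
Record modfun (X Y : gset G) (PX : G -> G -> X -> K) (PY : G -> G -> Y -> K) :=
  ModFun {
  Fo : (X -> nat) -> (Y -> nat);
  Fm : forall d d', hom d d' -> hom (Fo d) (Fo d');
  Fm_id : forall d, Fm (hid d) = hid (Fo d);
  Fm_comp : forall d1 d2 d3 (f : hom d1 d2) (g : hom d2 d3),
      Fm (hcomp f g) = hcomp (Fm f) (Fm g);
  Fm_add : forall d d' (f g : hom d d'), Fm (hadd f g) = hadd (Fm f) (Fm g);
  Fm_scale : forall d d' a (f : hom d d'), Fm (hscale a f) = hscale a (Fm f);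
  Fs : forall g d, hom (Fo (act_obj g d)) (act_obj g (Fo d));
  Fs_iso : forall g d, exists t : hom (act_obj g (Fo d)) (Fo (act_obj g d)),
      hcomp (Fs g d) t = hid _ /\ hcomp t (Fs g d) = hid _;
  Fs_nat : forall g d d' (f : hom d d'),
      hcomp (Fm (act_hom g f)) (Fs g d') = hcomp (Fs g d) (act_hom g (Fm f));
  Fs_mod : forall g h d,
      hcomp (Fs (g + h) d) (mcon PY g h (Fo d)) =
      hcomp (hcomp (Fm (mcon PX g h d)) (Fs g (act_obj h d)))
            (act_hom g (Fs h d)) }.

Section ModFunHom.
Variables (X Y : gset G) (PX : G -> G -> X -> K) (PY : G -> G -> Y -> K).

Record mfhom (F F' : modfun PX PY) := MFHom {
  eta : forall d, hom (Fo F d) (Fo F' d);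
  eta_nat : forall d d' (f : hom d d'),
      hcomp (Fm F f) (eta d') = hcomp (eta d) (Fm F' f);
  eta_mod : forall g d,
      hcomp (eta (act_obj g d)) (Fs F' g d) =
      hcomp (Fs F g d) (act_hom g (eta d)) }.

Definition mf_zero (F : modfun PX PY) : Prop := forall d y, Fo F d y = 0%N.

Definition mf_mono (F' F : modfun PX PY) (e : mfhom F' F) : Prop :=
  forall (F'' : modfun PX PY) (t1 t2 : mfhom F'' F'),
    (forall d, hcomp (eta t1 d) (eta e d) = hcomp (eta t2 d) (eta e d)) ->
    forall d, eta t1 d = eta t2 d.

Definition mf_iso (F' F : modfun PX PY) (e : mfhom F' F) : Prop :=
  exists i : mfhom F F', forall d,
    hcomp (eta e d) (eta i d) = hid _ /\ hcomp (eta i d) (eta e d) = hid _.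

Definition mf_simple (F : modfun PX PY) : Prop :=
  ~ mf_zero F /\
  forall (F' : modfun PX PY) (e : mfhom F' F),
    mf_mono e -> mf_zero F' \/ mf_iso e.

Definition delta (x : X) : X -> nat := fun x' => nat_of_bool (x' == x).

(* m^F_{xy} = dim Hom(F(x), y) = dimension of the y-component of F(x) *)
Definition mult (F : modfun PX PY) (x : X) (y : Y) : nat := Fo F (delta x) y.

End ModFunHom.
End Defs.

(* Main.v *)
Require Import Defs.
From HB Require Import structures.
From mathcomp Require Import all_boot all_algebra zify.
From Stdlib Require Import FunctionalExtensionality.
Set Implicit Arguments. Unset Strict Implicit. Unset Printing Implicit Defensive.
Import GRing.Theory.
Local Open Scope ring_scope.


Section Idm.
Variable K : fieldType.
Definition idm n m : 'M[K]_(n, m) := \matrix_(i, j) (nat_of_ord i == nat_of_ord j)%:R.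

Lemma idm_id n : idm n n = 1%:M.
Proof. by apply/matrixP=> i j; rewrite !mxE. Qed.

Lemma idm_mul n m k : n = m \/ m = k -> idm n m *m idm m k = idm n k.
Proof. by case=> e; subst; rewrite idm_id ?mul1mx ?mulmx1. Qed.

Lemma castmx1_idm n m (p : n = m) : castmx (erefl n, p) (1%:M : 'M[K]_n) = idm n m.
Proof. by apply/matrixP=> i j; rewrite castmxE !mxE. Qed.

Lemma idm_nat (T : Type) (D1 D2 : T -> nat) (M : forall p, 'M[K]_(D1 p, D2 p)) p1 p2 :
  p1 = p2 -> idm (D1 p1) (D1 p2) *m M p2 = M p1 *m idm (D2 p1) (D2 p2).
Proof. by move=> e; subst; rewrite !idm_id mul1mx mulmx1. Qed.

Lemma idm_inv n m : n = m -> idm n m *m idm m n = 1%:M.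
Proof. by move=> e; subst; rewrite idm_id mulmx1. Qed.

Lemma empty_rows (b : bool) n (A B : 'M[K]_(nat_of_bool b, n)) : ~~ b -> A = B.
Proof. by case: b A B => // A B _; apply/matrixP=> -[]. Qed.
End Idm.

Section Basic.
Variables (K : fieldType) (G : zmodType) (X Y : gset G).
Variables (PX : G -> G -> X -> K) (PY : G -> G -> Y -> K) (F : modfun PX PY).

Lemma homP (T : finType) (d d' : T -> nat) (f g : Defs.hom K d d') :
  (forall x, f x = g x) -> f = g.
Proof. by move=> e; apply: functional_extensionality_dep. Qed.

Definition hzero (T : finType) (d d' : T -> nat) : Defs.hom K d d' := fun x => 0.

Lemma Fm_zero d d' : Fm F (hzero d d') = hzero _ _.
Proof.
have -> : hzero d d' = hscale 0 (hzero d d') by apply: homP => x; rewrite /hscale scale0r.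
by rewrite Fm_scale; apply: homP => x; rewrite /hscale scale0r.
Qed.

Lemma hsumE (T : finType) (d d' : T -> nat) (I : Type) (r : seq I) (P : pred I)
   (f : I -> Defs.hom K d d') x :
  (\big[@hadd K T d d'/hzero d d']_(i <- r | P i) f i) x = \sum_(i <- r | P i) f i x.
Proof.
elim: r => [|i r IH]; first by rewrite !big_nil.
by rewrite !big_cons; case: (P i) => //; rewrite /hadd IH.
Qed.

Lemma Fm_sum d d' (I : Type) (r : seq I) (P : pred I) (f : I -> Defs.hom K d d') :
  Fm F (\big[@hadd K X d d'/hzero d d']_(i <- r | P i) f i) =
  \big[@hadd K Y _ _/hzero _ _]_(i <- r | P i) Fm F (f i).
Proof.
elim: r => [|i r IH]; first by rewrite !big_nil Fm_zero.
by rewrite !big_cons; case: (P i) => //; rewrite Fm_add IH.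
Qed.

Lemma FmC d1 d2 d3 (f : Defs.hom K d1 d2) (g : Defs.hom K d2 d3) y :
  Fm F (hcomp f g) y = Fm F f y *m Fm F g y.
Proof. by rewrite Fm_comp. Qed.

Lemma Fm1 d y : Fm F (hid K d) y = 1%:M.
Proof. by rewrite Fm_id. Qed.

End Basic.
Arguments hzero {K T} d d' x.


Section Sub.
Variables (K : fieldType) (G : zmodType) (X Y : gset G).
Variables (PX : G -> G -> X -> K) (PY : G -> G -> Y -> K) (F : modfun PX PY).
Variable S : forall d y, 'M[K]_(Fo F d y).
Hypothesis HS1 : forall d d' (f : Defs.hom K d d') y, (S d y *m Fm F f y <= S d' y)%MS.
Hypothesis HS2 : forall g d y,
  (S (act_obj g d) y *m Fs F g d y :=: S d (gs_act Y (- g) y))%MS.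

Fact v_key : unit. Proof. exact: tt. Qed.
Definition v : forall d y, 'M[K]_(\rank (S d y), Fo F d y) :=
  locked_with v_key (fun d y => row_base (S d y)).
Fact u_key : unit. Proof. exact: tt. Qed.
Definition u : forall d y, 'M[K]_(Fo F d y, \rank (S d y)) :=
  locked_with u_key (fun d y => pinvmx (v d y)).

Lemma uE d y : u d y = pinvmx (v d y).
Proof. by rewrite /u; case: u_key. Qed.
Lemma vE d y : v d y = row_base (S d y).
Proof. by rewrite /v; case: v_key. Qed.

Lemma vu d y : v d y *m u d y = 1%:M.
Proof. by rewrite uE; apply/mulmxVp; rewrite vE; apply: row_base_free. Qed.

Lemma uv d y m (B : 'M_(m, _)) : (B <= S d y)%MS -> B *m u d y *m v d y = B.
Proof. by move=> sB; rewrite uE; apply: mulmxKpV; rewrite vE eq_row_base. Qed.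

Lemma vS d y : (v d y <= S d y)%MS.
Proof. by rewrite vE eq_row_base. Qed.

Lemma v_free d y : row_free (v d y).
Proof. by rewrite vE; apply: row_base_free. Qed.

Lemma v_rank d y : \rank (v d y) = \rank (S d y).
Proof. by rewrite vE; apply/eqmx_rank/eqmxP/eq_row_base. Qed.

Lemma A1 d d' (f : Defs.hom K d d') y m (B : 'M_(m, _)) :
  (B <= S d y)%MS -> (B *m Fm F f y <= S d' y)%MS.
Proof. by move=> sB; apply: submx_trans (HS1 f y); apply: submxMr. Qed.

Lemma A2 g d y m (B : 'M_(m, _)) :
  (B <= S (act_obj g d) y)%MS -> (B *m Fs F g d y <= S d (gs_act Y (- g) y))%MS.
Proof. by move=> sB; rewrite -(HS2 g d y); apply: submxMr. Qed.

Arguments A1 {d d' f y m B}.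
Arguments A2 {g d y m B}.

Definition Fo' d y := \rank (S d y).
Definition Fm' d d' (f : Defs.hom K d d') : Defs.hom K (Fo' d) (Fo' d') :=
  fun y => v d y *m Fm F f y *m u d' y.
Definition Fs' g d : Defs.hom K (Fo' (act_obj g d)) (act_obj g (Fo' d)) :=
  fun y => v (act_obj g d) y *m Fs F g d y *m u d (gs_act Y (- g) y).

Lemma Fm'_id d : Fm' (hid K d) = hid K (Fo' d).
Proof. by apply: homP => y; rewrite /Fm' Fm1 mulmx1 vu. Qed.

Lemma Fm'_comp d1 d2 d3 (f : Defs.hom K d1 d2) (g : Defs.hom K d2 d3) :
  Fm' (hcomp f g) = hcomp (Fm' f) (Fm' g).
Proof.
apply: homP => y; rewrite /Fm' /hcomp FmC !mulmxA.
by rewrite (uv (A1 (vS _ _))).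
Qed.

Lemma Fm'_add d d' (f g : Defs.hom K d d') : Fm' (hadd f g) = hadd (Fm' f) (Fm' g).
Proof. by apply: homP => y; rewrite /Fm' Fm_add /hadd mulmxDr mulmxDl. Qed.

Lemma Fm'_scale d d' a (f : Defs.hom K d d') : Fm' (hscale a f) = hscale a (Fm' f).
Proof. by apply: homP => y; rewrite /Fm' Fm_scale /hscale -scalemxAr -scalemxAl. Qed.

Lemma Fs'_iso g d : exists t : Defs.hom K (act_obj g (Fo' d)) (Fo' (act_obj g d)),
  hcomp (Fs' g d) t = hid _ _ /\ hcomp t (Fs' g d) = hid _ _.
Proof.
have [t [h1 h2]] := Fs_iso F g d.
have h1y y := congr1 (fun h => h y) h1; have h2y y := congr1 (fun h => h y) h2.
rewrite /hcomp /hid /= in h1y h2y.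
have A3 y m (B : 'M_(m, _)) : (B <= S d (gs_act Y (- g) y))%MS ->
    (B *m t y <= S (act_obj g d) y)%MS.
  move=> sB; rewrite -(HS2 g d y) in sB.
  by have := submxMr (t y) sB; rewrite -mulmxA h1y mulmx1.
exists (fun y => v d (gs_act Y (- g) y) *m t y *m u (act_obj g d) y).
split; apply: homP => y; rewrite /hcomp /Fs' /hid.
  rewrite !mulmxA (uv (A2 (vS _ _))) -(mulmxA _ (Fs F g d y)) h1y mulmx1 vu //.
rewrite !mulmxA (uv (A3 _ _ _ (vS _ _))) -(mulmxA _ (t y)) h2y mulmx1 vu //.
Qed.

Lemma Fs'_nat g d d' (f : Defs.hom K d d') :
  hcomp (Fm' (act_hom g f)) (Fs' g d') = hcomp (Fs' g d) (act_hom g (Fm' f)).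
Proof.
apply: homP => y; rewrite /hcomp /Fm' /Fs' /act_hom !mulmxA.
rewrite (uv (A1 (vS _ _))).
have H := congr1 (fun h => h y) (Fs_nat F g f).
rewrite -(mulmxA _ _ (Fs F g d' y)).
have -> : Fm F (act_hom g f) y *m Fs F g d' y = Fs F g d y *m Fm F f (gs_act Y (-g) y) by exact: H.
by rewrite !mulmxA (uv (A2 (vS _ _))).
Qed.

Lemma Fs'_mod g h d :
  hcomp (Fs' (g + h) d) (mcon PY g h (Fo' d)) =
  hcomp (hcomp (Fm' (mcon PX g h d)) (Fs' g (act_obj h d))) (act_hom g (Fs' h d)).
Proof.
apply: homP => y.
have e : gs_act Y (- (g + h)) y = gs_act Y (- h) (gs_act Y (- g) y).
  by rewrite -gs_actD opprD addrC.
have H : Fs F (g + h) d y *m (PY g h y *: idm K (Fo F d (gs_act Y (- (g + h)) y))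
            (Fo F d (gs_act Y (- h) (gs_act Y (- g) y)))) =
   Fm F (mcon PX g h d) y *m Fs F g (act_obj h d) y *m Fs F h d (gs_act Y (- g) y).
  have := congr1 (fun f => f y) (Fs_mod F g h d).
  by rewrite /hcomp /act_hom {1}/mcon /hcast castmx1_idm.
have E : u d (gs_act Y (- (g + h)) y) *m
   idm K (act_obj (g + h) (Fo' d) y) (act_obj g (act_obj h (Fo' d)) y) =
   idm K (Fo F d (gs_act Y (- (g + h)) y)) (Fo F d (gs_act Y (- h) (gs_act Y (- g) y)))
   *m u d (gs_act Y (- h) (gs_act Y (- g) y)) by exact: (esym (idm_nat (u d) e)).
rewrite /hcomp /Fm' /Fs' /act_hom {1}/mcon /hcast castmx1_idm.
rewrite -scalemxAr -!mulmxA E.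
rewrite [X in X = _](_ : _ = v _ y *m ((Fs F (g + h) d y *m (PY g h y *: idm K
   (Fo F d (gs_act Y (- (g + h)) y)) (Fo F d (gs_act Y (- h) (gs_act Y (- g) y)))))
   *m u d (gs_act Y (- h) (gs_act Y (- g) y)))); last first.
  by rewrite -scalemxAr -scalemxAl -scalemxAr !mulmxA.
rewrite H !mulmxA (@uv (act_obj g (act_obj h d)) y _
  (v (act_obj (g + h) d) y *m Fm F (mcon PX g h d) y)); last exact: A1 (vS _ _).
by rewrite uv; last exact: A2 (A1 (vS _ _)).
Qed.

Definition Fsub : modfun PX PY :=
  ModFun Fm'_id Fm'_comp Fm'_add Fm'_scale Fs'_iso Fs'_nat Fs'_mod.

Lemma inc_nat d d' (f : Defs.hom K d d') :
  hcomp (Fm Fsub f) (v d') = hcomp (v d) (Fm F f).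
Proof. by apply: homP => y; rewrite /hcomp /= /Fm' (uv (A1 (vS _ _))). Qed.

Lemma inc_mod g d :
  hcomp (v (act_obj g d)) (Fs F g d) = hcomp (Fs Fsub g d) (act_hom g (v d)).
Proof. by apply: homP => y; rewrite /hcomp /= /Fs' /act_hom (uv (A2 (vS _ _))). Qed.

Definition inc : mfhom Fsub F := MFHom inc_nat inc_mod.

Lemma inc_mono : mf_mono inc.
Proof.
move=> F'' t1 t2 H d; apply: homP => y.
have := congr1 (fun h => h y) (H d); rewrite /hcomp /=.
exact: (row_free_inj (v_free _ _)).
Qed.

Lemma sub_simple : mf_simple F ->
  (forall d y, \rank (S d y) = 0%N) \/ (forall d y, \rank (S d y) = Fo F d y).
Proof.
case=> _ /(_ Fsub inc inc_mono) [Hz|[i Hi]]; [left|right] => d y.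
  exact: Hz.
apply/eqP; rewrite eqn_leq rank_leq_col /=.
have := congr1 (fun h => h y) (Hi d).2; rewrite /hcomp /hid /= => e.
rewrite -{1}(mxrank1 K (Fo F d y)) -e.
by apply: leq_trans (mxrankM_maxr _ _) _; rewrite v_rank.
Qed.
End Sub.


Lemma mul_thin (K : fieldType) n p n' (A : 'M[K]_(n, p)) (B : 'M_(p, n')) :
  p = 0%N -> A *m B = 0.
Proof. by move=> e; subst p; rewrite thinmx0 mul0mx. Qed.

Lemma one0 (K : fieldType) n : (1%:M : 'M[K]_n) = 0 -> n = 0%N.
Proof. by move=> e; have := mxrank1 K n; rewrite e mxrank0. Qed.

Lemma ordb0 (b : bool) (i : 'I_(nat_of_bool b)) : nat_of_ord i = 0%N.
Proof. by case: i; case: b => //= -[]. Qed.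

Lemma lt0nb (b : bool) : b -> (0 < nat_of_bool b)%N.
Proof. by case: b. Qed.

Lemma sum_b1 (K : fieldType) (b : bool) (hb : b) (f : 'I_(nat_of_bool b) -> K) :
  \sum_j f j = f (Ordinal (lt0nb hb)).
Proof.
case: b hb f => // hb f; rewrite big_ord1; congr (f _); exact: val_inj.
Qed.

Section Decomp.
Variables (K : fieldType) (G : zmodType) (X Y : gset G).
Variables (PX : G -> G -> X -> K) (PY : G -> G -> Y -> K) (F : modfun PX PY).

Definition inj (x : X) (k : nat) (d : X -> nat) : Defs.hom K (delta x) d :=
  fun z => \matrix_(i, j) ((z == x) && (nat_of_ord j == k))%:R.
Definition proj (x : X) (k : nat) (d : X -> nat) : Defs.hom K d (delta x) :=
  fun z => \matrix_(i, j) ((z == x) && (nat_of_ord i == k))%:R.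
Definition ID (T : finType) (D1 D2 : T -> nat) : Defs.hom K D1 D2 :=
  fun w => idm K (D1 w) (D2 w).

Lemma inj_comp x d d' (k : 'I_(d x)) (f : Defs.hom K d d') :
  hcomp (inj x k d) f =
  \big[@hadd K X _ _/hzero _ _]_(k' < d' x) hscale (f x k k') (inj x k' d').
Proof.
apply: homP => z; rewrite hsumE /hcomp.
have [ezx|nzx] := eqVneq z x; last by apply: empty_rows; rewrite /= nzx.
subst z; apply/matrixP => i j; rewrite !mxE summxE.
rewrite (bigD1 k) //= big1 => [|l nlk]; last first.
  by rewrite !mxE eqxx /= (inj_eq val_inj) (negbTE nlk) mul0r.
rewrite !mxE eqxx eqxx mul1r addr0.
rewrite (bigD1 j) //= big1 => [|l nlj]; last first.
  by rewrite !mxE eqxx /= eq_sym (inj_eq val_inj) (negbTE nlj) mulr0.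
by rewrite !mxE !eqxx mulr1 addr0.
Qed.

Lemma decomp d :
  hid K d = \big[@hadd K X _ _/hzero _ _]_(x : X)
            \big[@hadd K X _ _/hzero _ _]_(k < d x) hcomp (proj x k d) (inj x k d).
Proof.
apply: homP => z; rewrite hsumE /hid (bigD1 z) //= big1 => [|x nxz]; last first.
  rewrite hsumE big1 // => k _; rewrite /hcomp; apply: mul_thin.
  by rewrite /delta eq_sym (negbTE nxz).
rewrite hsumE addr0; apply/matrixP => i j; rewrite summxE.
rewrite (bigD1 i) //= big1 => [|k nki]; last first.
  rewrite !mxE big1 // => l _; rewrite !mxE eqxx /=.
  by rewrite (_ : (_ == _ :> nat) = false) ?mul0r //; apply/negP => /eqP /val_inj e;
    rewrite e eqxx in nki.
rewrite addr0 !mxE.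
rewrite /proj /inj. under eq_bigr do rewrite !mxE.
by rewrite big_const_ord /delta !eqxx /= addr0 mul1r eq_sym.
Qed.

Lemma nonzero_delta d y : (forall x, mult F x y = 0%N) -> Fo F d y = 0%N.
Proof.
move=> H; apply: (@one0 K).
have := congr1 (fun h => Fm F h y) (decomp d).
rewrite Fm_id /hid => ->; rewrite Fm_sum hsumE big1 // => x _.
rewrite Fm_sum hsumE big1 // => k _.
by rewrite FmC; apply: mul_thin; apply: H.
Qed.

(* the subfunctor generated by a family of subspaces L x y of F(x)_y *)
Variable L : forall x y, 'M[K]_(Fo F (delta x) y).

Definition SL d y : 'M[K]_(Fo F d y) :=
  (\sum_(x : X) \sum_(k < d x) <<L x y *m Fm F (inj x k d) y>>)%MS.

Lemma SL1 d d' (f : Defs.hom K d d') y : (SL d y *m Fm F f y <= SL d' y)%MS.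
Proof.
rewrite /SL sumsmxMr_gen; apply/sumsmx_subP => x _.
rewrite genmxE sumsmxMr_gen; apply/sumsmx_subP => k _; rewrite genmxE.
rewrite (eqmxMr _ (genmxE _)) -mulmxA -FmC inj_comp Fm_sum hsumE mulmx_sumr.
apply: summx_sub => k' _; rewrite Fm_scale /hscale -scalemxAr; apply: scalemx_sub.
apply: (sumsmx_sup x) => //; apply: (sumsmx_sup k') => //.
by rewrite genmxE.
Qed.

Fact R_key : unit. Proof. exact: tt. Qed.
Definition R : forall (a : G) (x z : X) (y : Y),
    'M[K]_(Fo F (delta x) y, Fo F (delta z) (gs_act Y (- a) y)) :=
  locked_with R_key (fun a x z y =>
  Fm F (ID (delta x) (act_obj a (delta z))) y *m Fs F a (delta z) y).
Lemma RE a x z y : R a x z y =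
  Fm F (ID (delta x) (act_obj a (delta z))) y *m Fs F a (delta z) y.
Proof. by rewrite /R; case: R_key. Qed.

Hypothesis Linv : forall a x y,
  (L x y *m R a x (gs_act X (- a) x) y :=: L (gs_act X (- a) x) (gs_act Y (- a) y))%MS.

Lemma act_inj (T : gset G) (a : G) : injective (gs_act T a).
Proof.
move=> p q e; have := congr1 (gs_act T (- a)) e.
by rewrite -!gs_actD addNr !gs_act0.
Qed.

Lemma inj_act a x d (k : 'I_(d (gs_act X (- a) x))) :
  @inj x k (act_obj a d) =
  hcomp (ID (delta x) (act_obj a (delta (gs_act X (- a) x))))
        (act_hom a (inj (gs_act X (- a) x) k d)).
Proof.
apply: homP => w; rewrite /hcomp /ID /act_hom.
have [ewx|nwx] := eqVneq w x; last by apply: empty_rows; rewrite /= nwx.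
subst w; apply/matrixP => i j; rewrite !mxE.
rewrite (sum_b1 (eqxx _)) !mxE /= ordb0 !eqxx /=.
by rewrite mul1r.
Qed.
Lemma R_inj a x d y (k : 'I_(d (gs_act X (- a) x))) :
  Fm F (@inj x k (act_obj a d)) y *m Fs F a d y =
  R a x (gs_act X (- a) x) y *m Fm F (inj (gs_act X (- a) x) k d) (gs_act Y (- a) y).
Proof.
rewrite inj_act FmC RE -!mulmxA; congr (_ *m _).
have := congr1 (fun h => h y) (Fs_nat F a (inj (gs_act X (- a) x) k d)).
by rewrite /hcomp /act_hom.
Qed.

Lemma SL2 g d y : (SL (act_obj g d) y *m Fs F g d y :=: SL d (gs_act Y (- g) y))%MS.
Proof.
rewrite /SL; apply: eqmx_trans (sumsmxMr_gen _ _ _) _.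
rewrite [X in (_ :=: X)%MS](reindex_inj (@act_inj X (- g))).
apply: eqmx_sums => x _; apply: eqmx_trans (genmxE _) _.
apply: eqmx_trans (sumsmxMr_gen _ _ _) _.
apply: eqmx_sums => k _; apply: eqmx_trans (genmxE _) _; apply: eqmx_trans _ (eqmx_sym (genmxE _)).
apply: eqmx_trans (eqmxMr _ (genmxE _)) _; rewrite -mulmxA R_inj mulmxA.
exact: eqmxMr.
Qed.
End Decomp.


Section Rcomp.
Variables (K : fieldType) (G : zmodType) (X Y : gset G).
Variables (PX : G -> G -> X -> K) (PY : G -> G -> Y -> K) (F : modfun PX PY).

Lemma act_comp (T : gset G) a b (p : T) :
  gs_act T (- (a + b)) p = gs_act T (- b) (gs_act T (- a) p).
Proof. by rewrite -gs_actD opprD addrC. Qed.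

Lemma ID_comp (D1 D2 D3 : X -> nat) : (forall w, D1 w = D2 w) ->
  hcomp (ID K D1 D2) (ID K D2 D3) = ID K D1 D3.
Proof. by move=> e; apply: homP => w; rewrite /hcomp /ID idm_mul //; left. Qed.

Lemma ID_mcon a b x z :
  z = gs_act X (- b) (gs_act X (- a) x) ->
  hcomp (ID K (delta x) (act_obj (a + b) (delta z))) (mcon PX a b (delta z)) =
  hscale (PX a b x) (ID K (delta x) (act_obj a (act_obj b (delta z)))).
Proof.
move=> ez; apply: homP => w; rewrite /hcomp /ID /mcon /hcast /hscale castmx1_idm.
have [ewx|nwx] := eqVneq w x; last by apply: empty_rows; rewrite /= nwx.
subst w; rewrite -scalemxAr idm_mul //; left.
by rewrite /act_obj /delta ez act_comp !eqxx.
Qed.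

Lemma Rcomp a b x z1 z2 y : z1 = gs_act X (- a) x -> z2 = gs_act X (- b) z1 ->
  PX a b x *: (R F a x z1 y *m R F b z1 z2 (gs_act Y (- a) y)) =
  PY a b y *: (R F (a + b) x z2 y *m
     idm K (Fo F (delta z2) (gs_act Y (- (a + b)) y))
           (Fo F (delta z2) (gs_act Y (- b) (gs_act Y (- a) y)))).
Proof.
move=> e1 e2.
have N := congr1 (fun h => h y) (Fs_nat F a (ID K (delta z1) (act_obj b (delta z2)))).
rewrite /hcomp /act_hom /= in N.
have M := congr1 (fun h => h y) (Fs_mod F a b (delta z2)).
rewrite /hcomp /act_hom {1}/mcon /hcast castmx1_idm /= in M.
rewrite !RE !mulmxA -(mulmxA _ (Fs F a _ y)) -N mulmxA -FmC.
rewrite ID_comp; last first.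
  by move=> w; rewrite /act_obj /delta e1 (inj_eq (@act_inj _ X _)).
rewrite !scalemxAl.
have -> : PX a b x *: Fm F (ID K (delta x) (act_obj a (act_obj b (delta z2)))) y =
  Fm F (hscale (PX a b x) (ID K (delta x) (act_obj a (act_obj b (delta z2))))) y.
  by rewrite Fm_scale.
rewrite -ID_mcon; last by rewrite e2 e1.
rewrite FmC -!mulmxA (mulmxA (Fm F (mcon _ _ _ _) y)) -M.
by rewrite -!scalemxAr -scalemxAl.
Qed.
End Rcomp.

Section RUnit.
Variables (K : fieldType) (G : zmodType) (X Y : gset G).
Variables (PX : G -> G -> X -> K) (PY : G -> G -> Y -> K) (F : modfun PX PY).

Lemma ID_hid (D : X -> nat) : ID K D D = hid K D.
Proof. by apply: homP => w; rewrite /ID idm_id. Qed.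

Lemma R_unit a x z y : z = gs_act X (- a) x ->
  exists R', R F a x z y *m R' = 1%:M /\ R' *m R F a x z y = 1%:M.
Proof.
move=> e.
have eD : forall w, delta x w = act_obj a (delta z) w.
  by move=> w; rewrite /act_obj /delta e (inj_eq (@act_inj _ X _)).
have [t [h1 h2]] := Fs_iso F a (delta z).
have h1y := congr1 (fun h => h y) h1; have h2y := congr1 (fun h => h y) h2.
rewrite /hcomp /hid /= in h1y h2y.
exists (t y *m Fm F (ID K (act_obj a (delta z)) (delta x)) y); split.
  rewrite !RE -!mulmxA (mulmxA (Fs F a _ y)) h1y mul1mx -FmC ID_comp //.
  by rewrite ID_hid Fm1.
rewrite !RE -!mulmxA (mulmxA (Fm F _ y)) -FmC ID_comp; last by move=> w; rewrite eD.
by rewrite ID_hid Fm1 mul1mx h2y.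
Qed.

Lemma inv_dims n m (A : 'M[K]_(n, m)) (B : 'M_(m, n)) :
  A *m B = 1%:M -> B *m A = 1%:M -> n = m.
Proof.
move=> h1 h2; apply/eqP; rewrite eqn_leq.
have := mxrankM_maxl A B; rewrite h1 mxrank1 => /leq_trans -> //; last exact: rank_leq_col.
have := mxrankM_maxl B A; rewrite h2 mxrank1 => /leq_trans -> //; exact: rank_leq_col.
Qed.

Lemma R_dims a x z y : z = gs_act X (- a) x ->
  Fo F (delta x) y = Fo F (delta z) (gs_act Y (- a) y).
Proof. by move=> e; have [R' [h1 h2]] := R_unit y e; apply: inv_dims h1 h2. Qed.
End RUnit.

Section Lines.
Variables (K : fieldType) (G : finZmodType) (X Y : gset G).
Variables (PX : G -> G -> X -> K) (PY : G -> G -> Y -> K) (F : modfun PX PY).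
Hypothesis hPX : forall g h x, PX g h x != 0.
Hypothesis hPY : forall g h y, PY g h y != 0.
Variables (x0 : X) (y0 : Y) (w : 'rV[K]_(Fo F (delta x0) y0)).

Definition LL x y : 'M[K]_(Fo F (delta x) y) :=
  (\sum_(a | (gs_act X (- a) x0 == x) && (gs_act Y (- a) y0 == y))
     << w *m R F a x0 x y0 *m idm K (Fo F (delta x) (gs_act Y (- a) y0)) (Fo F (delta x) y) >>)%MS.

Lemma LLinv b x y :
  (LL x y *m R F b x (gs_act X (- b) x) y :=: LL (gs_act X (- b) x) (gs_act Y (- b) y))%MS.
Proof.
rewrite /LL; apply: eqmx_trans (sumsmxMr_gen _ _ _) _.
have hinj : injective (fun a : G => a + b) := can_inj (fun a => addrK b a).
rewrite [X in (_ :=: X)%MS](reindex_inj hinj) /=.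
rewrite [X in (_ :=: X)%MS](eq_bigl (fun a => (gs_act X (- a) x0 == x) && (gs_act Y (- a) y0 == y))); last first.
  by move=> a; rewrite !act_comp !(inj_eq (@act_inj _ _ _)).
apply: eqmx_sums => a /andP [/eqP ex /eqP ey].
apply: eqmx_trans (genmxE _) _; apply: eqmx_trans _ (eqmx_sym (genmxE _)).
apply: eqmx_trans (eqmxMr _ (genmxE _)) _.
rewrite -!mulmxA (idm_nat (R F b x (gs_act X (- b) x)) ey) !mulmxA.
set z := gs_act X (- b) x.
have RC := Rcomp F y0 (esym ex) (erefl z).
rewrite -(mulmxA w).
have -> : R F a x0 x y0 *m R F b x z (gs_act Y (- a) y0) =
   (PY a b y0 / PX a b x0) *: (R F (a + b) x0 z y0 *m
     idm K (Fo F (delta z) (gs_act Y (- (a + b)) y0))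
           (Fo F (delta z) (gs_act Y (- b) (gs_act Y (- a) y0)))).
  by rewrite -[LHS]scale1r -(mulVf (hPX a b x0)) -(scalerA (PX a b x0)^-1 (PX a b x0)) RC scalerA mulrC.
rewrite -scalemxAr -scalemxAl; apply: eqmx_trans (eqmx_scale _ _) _.
  by rewrite mulf_neq0 ?invr_eq0.
rewrite -!mulmxA idm_mul //; right; congr (Fo F (delta z) _).
by rewrite ey.
Qed.

Definition stab a := (gs_act X (- a) x0 == x0) && (gs_act Y (- a) y0 == y0).

Lemma stab0 : stab 0.
Proof. by rewrite /stab oppr0 !gs_act0 !eqxx. Qed.

Lemma stabD a b : stab a -> stab b -> stab (a + b).
Proof.
by case/andP => /eqP ha /eqP hb /andP [/eqP ka /eqP kb]; rewrite /stab !act_comp ha hb ka kb !eqxx.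
Qed.

Lemma stabMn k j : stab k -> stab (k *+ j).
Proof. by move=> hk; elim: j => [|j IH]; rewrite ?mulr0n ?stab0 // mulrS stabD. Qed.

Definition Q a : 'M[K]_(Fo F (delta x0) y0) :=
  R F a x0 x0 y0 *m idm K (Fo F (delta x0) (gs_act Y (- a) y0)) (Fo F (delta x0) y0).

Lemma Qmul a b : stab a -> stab b ->
  Q a *m Q b = (PY a b y0 / PX a b x0) *: Q (a + b).
Proof.
case/andP => /eqP xa /eqP ya /andP [/eqP xb /eqP yb].
rewrite /Q mulmxA -(mulmxA (R F a _ _ _)) (idm_nat (R F b x0 x0) ya).
rewrite !mulmxA.
have RC := Rcomp F y0 (esym xa) (esym xb).
have -> : R F a x0 x0 y0 *m R F b x0 x0 (gs_act Y (- a) y0) =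
   (PY a b y0 / PX a b x0) *: (R F (a + b) x0 x0 y0 *m
     idm K (Fo F (delta x0) (gs_act Y (- (a + b)) y0))
           (Fo F (delta x0) (gs_act Y (- b) (gs_act Y (- a) y0)))).
  by rewrite -[LHS]scale1r -(mulVf (hPX a b x0)) -(scalerA (PX a b x0)^-1 (PX a b x0)) RC scalerA mulrC.
rewrite -!scalemxAl -!mulmxA idm_mul; last by left; rewrite ya.
by rewrite idm_mul //; right; rewrite ya yb.
Qed.

Lemma Q_unit a : stab a -> exists Q', Q a *m Q' = 1%:M /\ Q' *m Q a = 1%:M.
Proof.
case/andP => /eqP xa /eqP ya.
have [R' [h1 h2]] := R_unit F y0 (esym xa).
have ed : Fo F (delta x0) (gs_act Y (- a) y0) = Fo F (delta x0) y0 by rewrite ya.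
exists (idm K _ _ *m R'); split.
  by rewrite /Q -mulmxA (mulmxA (idm K _ _)) idm_inv // mul1mx h1.
by rewrite /Q mulmxA -(mulmxA _ R') h2 mulmx1 idm_inv.
Qed.

Lemma Q0 : Q 0 = (PY 0 0 y0 / PX 0 0 x0) *: 1%:M.
Proof.
have := Qmul stab0 stab0; rewrite addr0 => e.
have [Q' [h1 h2]] := Q_unit stab0.
have := congr1 (mulmx^~ Q') e; rewrite -mulmxA h1 mulmx1 -scalemxAl h1 => ->.
by [].
Qed.

Lemma cnz a b : PY a b y0 / PX a b x0 != 0.
Proof. by rewrite mulf_neq0 ?invr_eq0. Qed.

Variables (k : G) (lam : K).
Hypothesis hk : stab k.
Hypothesis hgen : forall a, stab a -> exists j, a = k *+ j.
Hypothesis hlam : w *m Q k = lam *: w.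

Lemma w_stab a : stab a -> (w *m Q a <= w)%MS.
Proof.
move=> /hgen [j ->]; elim: j => [|j IH].
  by rewrite mulr0n Q0 -scalemxAr mulmx1 scalemx_sub.
have e := Qmul hk (stabMn j hk); rewrite -mulrS in e.
have -> : Q (k *+ j.+1) = (PY k (k *+ j) y0 / PX k (k *+ j) x0)^-1 *: (Q k *m Q (k *+ j)).
  by rewrite e scalerA mulVf ?scale1r // cnz.
by rewrite -scalemxAr mulmxA hlam -scalemxAl !scalemx_sub.
Qed.

Lemma LL0 : (LL x0 y0 <= w)%MS.
Proof.
apply/sumsmx_subP => a ha; rewrite genmxE -mulmxA; exact: w_stab.
Qed.
End Lines.


Lemma big_b1 (R : Type) (idx : R) (op : Monoid.law idx) (b : bool) (hb : b)
   (f : 'I_(nat_of_bool b) -> R) :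
  \big[op/idx]_j f j = f (Ordinal (lt0nb hb)).
Proof. case: b hb f => // hb f; rewrite big_ord1; congr (f _); exact: val_inj. Qed.

Lemma ord_false (b : bool) (i : 'I_(nat_of_bool b)) : b.
Proof. by case: b i => // -[]. Qed.

Section Final.
Variables (K : fieldType) (G : finZmodType) (X Y : gset G).
Variables (PX : G -> G -> X -> K) (PY : G -> G -> Y -> K) (F : modfun PX PY).

Lemma act_inv (T : gset G) g (p : T) : gs_act T (- g) (gs_act T g p) = p.
Proof. by rewrite -gs_actD addNr gs_act0. Qed.

Lemma inj_delta (x : X) (k : 'I_(delta x x)) : inj K x k (delta x) = hid K (delta x).
Proof.
apply: homP => z; rewrite /inj /hid.
have [ezx|nzx] := eqVneq z x; last by apply: empty_rows; rewrite /= nzx.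
subst z; apply/matrixP => i j; rewrite !mxE /=.
rewrite (ordb0 j) (ordb0 k) eqxx.
by have -> : i == j by apply/eqP/val_inj; rewrite /= !ordb0.
Qed.

Lemma SL_delta (L : forall x y, 'M[K]_(Fo F (delta x) y)) x y :
  (SL L (delta x) y :=: L x y)%MS.
Proof.
rewrite /SL (bigD1 x) //= [X in (_ + X)%MS]big1 => [|x' nx]; last first.
  by apply: big1 => k' _; have := ord_false k'; rewrite (negbTE nx).
apply: eqmx_trans (addsmx0 _ _) _.
rewrite (big_b1 _ (eqxx x)) inj_delta Fm1 mulmx1; exact: genmxE.
Qed.

Lemma SL_rank (L : forall x y, 'M[K]_(Fo F (delta x) y)) x y :
  \rank (SL L (delta x) y) = \rank (L x y).
Proof. by apply/eqmx_rank/eqmxP/SL_delta. Qed.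

Hypothesis hPX : forall g h x, PX g h x != 0.
Hypothesis hPY : forall g h y, PY g h y != 0.
Variables (x0 : X) (y0 : Y) (w : 'rV[K]_(Fo F (delta x0) y0)).
Variables (k : G) (lam : K).
Hypothesis hk : stab x0 y0 k.
Hypothesis hgen : forall a, stab x0 y0 a -> exists j, a = k *+ j.
Hypothesis hlam : w *m Q F x0 y0 k = lam *: w.
Hypothesis hw0 : w != 0.
Hypothesis hF : mf_simple F.

Theorem main_generic x y :
  mult F x y =
  (if [exists g, (x == gs_act X g x0) && (y == gs_act Y g y0)] then 1 else 0)%N.
Proof.
have HS1 := SL1 (LL w).
have HS2 := SL2 (LLinv hPX hPY w).
case: (sub_simple HS1 HS2 hF) => H.
  exfalso; have := H (delta x0) y0; rewrite SL_rank.
  move/eqP; rewrite mxrank_eq0 -submx0.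
  have : (w *m Q F x0 y0 0 <= LL w x0 y0)%MS.
    by apply: (sumsmx_sup 0); [exact: stab0 | rewrite genmxE /Q mulmxA].
  move=> h1 h2; have := submx_trans h1 h2.
  rewrite (Q0 F hPX x0 y0) -scalemxAr mulmx1 submx0 scaler_eq0 (negbTE hw0) orbF.
  by rewrite (negbTE (cnz hPX hPY _ _ _ _)).
rewrite /mult -(H (delta x) y) SL_rank.
case: ifP => [/existsP [g /andP [/eqP ex /eqP ey]] | /negbT nex].
  have ez : x0 = gs_act X (- g) x by rewrite ex act_inv.
  rewrite -SL_rank H (R_dims F y ez) ey act_inv.
  apply/eqP; rewrite eqn_leq; apply/andP; split.
    rewrite -(H (delta x0) y0) SL_rank.
    apply: leq_trans (mxrankS (LL0 hPX hPY hk hgen hlam)) _; exact: rank_leq_row.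
  rewrite lt0n; apply: contra hw0 => /eqP e.
  by move: w; rewrite e => w'; rewrite thinmx0.
rewrite /LL big_pred0 ?mxrank0 // => a; apply/negbTE; apply: contra nex.
case/andP => /eqP <- /eqP <-; apply/existsP; exists (- a).
by rewrite !eqxx.
Qed.
End Final.


Lemma cyc_gen m (P : pred 'I_m.+1) : P 0 -> (forall a b, P a -> P b -> P (a + b)) ->
  (forall a, P a -> P (- a)) -> exists k, P k /\ forall a, P a -> exists j, a = k *+ j.
Proof.
move=> P0 PD PN.
case: (pickP (fun a => P a && (a != 0))) => [a0 /andP [Pa0 nz] | none]; last first.
  exists 0; split=> // a Pa; exists 0%N; rewrite mulr0n.
  by have := none a; rewrite Pa /= => /negbFE/eqP.
have := arg_minnP (fun i : 'I_m.+1 => nat_of_ord i) (P := fun a => P a && (a != 0))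
  (i0 := a0) (introT andP (conj Pa0 nz)).
case=> k /andP [Pk nk] kmin.
exists k; split => // a Pa.
have kpos : (0 < nat_of_ord k)%N.
  by rewrite lt0n; apply: contra nk => /eqP e; apply/eqP/val_inj.
set j := (nat_of_ord a %/ nat_of_ord k)%N; exists j.
have kja : (nat_of_ord k * j <= nat_of_ord a)%N by rewrite mulnC leq_trunc_div.
have ekj : nat_of_ord (k *+ j) = (nat_of_ord k * j)%N.
  by rewrite Zp_mulrn /= modn_small // (leq_ltn_trans kja).
have PM : forall n, P (k *+ n) by elim=> [|n IH]; rewrite ?mulr0n // mulrS PD.
set b := a - k *+ j.
have Pb : P b by rewrite /b PD // PN.
have eb : b + k *+ j = a by rewrite subrK.
clearbody b.
have vb : nat_of_ord b = (nat_of_ord a %% nat_of_ord k)%N.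
  have := congr1 (@nat_of_ord _) eb; rewrite /= ekj.
  have hb := ltn_ord b; have ha := ltn_ord a.
  have := divn_eq (nat_of_ord a) (nat_of_ord k); rewrite -/j => ediv.
  case: (ltnP (nat_of_ord b + nat_of_ord k * j) m.+1) => h.
    rewrite modn_small // => e; lia.
  have -> : (nat_of_ord b + nat_of_ord k * j = (nat_of_ord b + nat_of_ord k * j - m.+1) + m.+1)%N.
    by rewrite subnK.
  rewrite modnDr modn_small => [e|]; lia.
have : b == 0.
  apply/negPn/negP => nb.
  have := kmin b; rewrite Pb nb /= => /(_ isT); rewrite vb.
  by rewrite leqNgt ltn_mod kpos.
by move/eqP => b0; rewrite -eb b0 add0r.
Qed.

Unset Implicit Arguments. Set Strict Implicit. Set Printing Implicit Defensive.

Theorem lemma5p20 (K : closedFieldType) (m : nat)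
  (w : 'I_m.+1 -> 'I_m.+1 -> 'I_m.+1 -> K)
  (X Y : gset 'I_m.+1)
  (PX : 'I_m.+1 -> 'I_m.+1 -> X -> K) (PY : 'I_m.+1 -> 'I_m.+1 -> Y -> K)
  (hw : normalized_3cocycle w)
  (hX : module_twist w PX) (hY : module_twist w PY)
  (F : modfun PX PY) (hF : mf_simple F) :
  exists (x0 : X) (y0 : Y), forall (x : X) (y : Y),
    mult F x y =
      (if [exists g : 'I_m.+1, (x == gs_act X g x0) && (y == gs_act Y g y0)]
       then 1 else 0)%N.
Proof.
have hPX := hX.1; have hPY := hY.1.
have [x0 [y0 hxy]] : exists x0 y0, (0 < Fo F (delta x0) y0)%N.
  case: (boolP [exists x0, exists y0, (0 < Fo F (delta x0) y0)%N]).
    by case/existsP => x0 /existsP [y0 h]; exists x0, y0.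
  move=> hn; exfalso; apply: hF.1 => d y; apply: nonzero_delta => x.
  apply/eqP; rewrite -leqn0 leqNgt; apply: contra hn => h.
  by apply/existsP; exists x; apply/existsP; exists y.
have stabN : forall a, stab x0 y0 a -> stab x0 y0 (- a).
  move=> a /andP [/eqP ha /eqP hb]; rewrite /stab opprK.
  have e1 : gs_act X a x0 = x0 by rewrite -{1}ha -gs_actD subrr gs_act0.
  have e2 : gs_act Y a y0 = y0 by rewrite -{1}hb -gs_actD subrr gs_act0.
  by rewrite e1 e2 !eqxx.
have [k [hk hgen]] := cyc_gen (stab0 x0 y0) (@stabD _ _ _ x0 y0) stabN.
have [lam] : exists lam, eigenvalue (Q F x0 y0 k) lam.
  have /closed_rootP [lam hl] : size (char_poly (Q F x0 y0 k)) != 1%N.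
    by rewrite size_char_poly; case: (Fo F (delta x0) y0) hxy.
  by exists lam; rewrite eigenvalue_root_char.
case/eigenvalueP => v hv hv0.
exists x0, y0 => x y.
exact: (main_generic hPX hPY hk hgen hv hv0 hF x y).
Qed.
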